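(* Let $H=\langle a_1,\dots,a_\ell\rangle$, $R=k[[H]]$, $r=\mathrm r(R)\ge2$, and write $\mathrm{PF}(H)=\{c_1<c_2<\dots<c_r=f\}$. Assume $R$ is a $2$-AGL ring. Then $K/R\cong(R/\mathfrak c)^{\oplus(r-1)}$ as $R$-modules if and only if there is $1\le j\le\ell$ with $f+a_j=c_i+c_{r-i}$ for all $1\le i\le r-1$.
   Context: $k$ is a field; $a_1,\dots,a_\ell$ positive integers with $\gcd=1$; $H=\langle a_1,\dots,a_\ell\rangle$ the numerical semigroup they generate; $R=k[[t^{a_1},\dots,t^{a_\ell}]]\subseteq k[[t]]$. $f=\max(\mathbb Z\setminus H)$, $\mathrm{PF}(H)=\{n\in\mathbb Z\setminus H:n+a_i\in H\ \forall i\}$, $\mathrm r(R)=\#\mathrm{PF}(H)$. Fractional canonical ideal $K=\sum_{c\in\mathrm{PF}(H)}Rt^{f-c}$, $S=R[K]$, $\mathfrak c=R:S=\{z\in\mathrm Q(R): zS\subseteq R\}$. $R$ is $2$-AGL iff $\ell_R(S/K)=2$. *)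

(* Defs.v *)
From HB Require Import structures.
From mathcomp Require Import all_boot all_order all_algebra.
Set Implicit Arguments. Unset Strict Implicit. Unset Printing Implicit Defensive.
Import GRing.Theory.
Local Open Scope ring_scope.

Definition series (k : fieldType) := nat -> k.
Definition szero (k : fieldType) : series k := fun _ => 0.
Definition sadd (k : fieldType) (x y : series k) : series k := fun n => x n + y n.
Definition sopp (k : fieldType) (x : series k) : series k := fun n => - x n.
Definition ssub (k : fieldType) (x y : series k) : series k := sadd x (sopp y).
Definition smul (k : fieldType) (x y : series k) : series k :=
  fun n => \sum_(i < n.+1) x i * y (n - i)%N.
Definition smono (k : fieldType) (m : nat) : series k :=
  fun n => if n == m then 1 else 0.

Definition inH (l : nat) (a : 'I_l -> nat) (n : nat) : Prop :=
  exists c : 'I_l -> nat, n = (\sum_(i < l) c i * a i)%N.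

Definition isPF (l : nat) (a : 'I_l -> nat) (n : nat) : Prop :=
  ~ inH a n /\ forall i : 'I_l, inH a (n + a i)%N.

Definition is_frobenius (l : nat) (a : 'I_l -> nat) (f : nat) : Prop :=
  ~ inH a f /\ forall n : nat, (f < n)%N -> inH a n.

Definition semigroupR (k : fieldType) (l : nat) (a : 'I_l -> nat)
  (x : series k) : Prop :=
  forall n : nat, x n != 0 -> inH a n.

(* K = sum_{c in PF(H)} R t^{f-c}, where cs enumerates PF(H) *)
Definition canonK (k : fieldType) (l : nat) (a : 'I_l -> nat) (f : nat)
  (cs : seq nat) (x : series k) : Prop :=
  exists coef : nat -> series k,
    (forall i, (i < size cs)%N -> semigroupR a (coef i)) /\
    forall n, x n = \sum_(i < size cs) smul (coef i) (smono k (f - nth 0%N cs i)) n.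

(* the subring generated by P and Q (P containing 1): R[K] *)
Inductive ring_gen (k : fieldType) (P Q : series k -> Prop) : series k -> Prop :=
| RG_P x : P x -> ring_gen P Q x
| RG_Q x : Q x -> ring_gen P Q x
| RG_add x y : ring_gen P Q x -> ring_gen P Q y -> ring_gen P Q (sadd x y)
| RG_mul x y : ring_gen P Q x -> ring_gen P Q y -> ring_gen P Q (smul x y)
| RG_ext x y : ring_gen P Q x -> (forall n, x n = y n) -> ring_gen P Q y.

Definition ringS (k : fieldType) (l : nat) (a : 'I_l -> nat) (f : nat)
  (cs : seq nat) : series k -> Prop :=
  ring_gen (semigroupR a) (canonK a f cs).

(* c = R : S  (automatically contained in R since 1 in S) *)
Definition conductor (k : fieldType) (l : nat) (a : 'I_l -> nat) (f : nat)
  (cs : seq nat) (z : series k) : Prop :=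
  forall s, ringS a f cs s -> semigroupR a (smul z s).

Definition Rsubmod (k : fieldType) (Rp : series k -> Prop) (P : series k -> Prop) : Prop :=
  [/\ P (szero k),
      (forall x y, P x -> P y -> P (sadd x y)),
      (forall r x, Rp r -> P x -> P (smul r x)) &
      (forall x y, P x -> (forall n, x n = y n) -> P y)].

Definition has_chain (k : fieldType) (Rp : series k -> Prop)
  (N M : series k -> Prop) (n : nat) : Prop :=
  exists C : nat -> (series k -> Prop),
    [/\ (forall x, C 0%N x <-> N x),
        (forall x, C n x <-> M x),
        (forall i, (i <= n)%N -> Rsubmod Rp (C i)) &
        (forall i, (i < n)%N ->
           (forall x, C i x -> C i.+1 x) /\ exists x, C i.+1 x /\ ~ C i x)].

Definition lengthR (k : fieldType) (Rp : series k -> Prop)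
  (N M : series k -> Prop) (n : nat) : Prop :=
  has_chain Rp N M n /\ ~ has_chain Rp N M n.+1.

Definition is_2AGL (k : fieldType) (l : nat) (a : 'I_l -> nat) (f : nat)
  (cs : seq nat) : Prop :=
  lengthR (semigroupR (k:=k) a) (canonK a f cs) (ringS a f cs) 2.

(* M/N isomorphic to (Rp/I)^{(m)} as Rp-modules, expressed by a lifted map
   psi : M -> Rp^m inducing an Rp-linear bijection M/N -> (Rp/I)^m. *)
Definition quot_iso_pow (k : fieldType) (Rp : series k -> Prop)
  (M N I : series k -> Prop) (m : nat) : Prop :=
  exists psi : series k -> 'I_m -> series k,
  (forall x, M x -> forall j, Rp (psi x j)) /\
      (forall x y, M x -> (forall n, x n = y n) -> forall j, I (ssub (psi x j) (psi y j))) /\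
      (forall x y, M x -> M y -> forall j,
          I (ssub (ssub (psi (sadd x y) j) (psi x j)) (psi y j))) /\
      (forall r x, Rp r -> M x -> forall j,
          I (ssub (psi (smul r x) j) (smul r (psi x j)))) /\
      (forall v : 'I_m -> series k, (forall j, Rp (v j)) ->
          exists x, M x /\ forall j, I (ssub (psi x j) (v j))) /\
      (forall x, M x -> ((forall j, I (psi x j)) <-> N x)).

(* Main.v *)
Require Import Defs.
From HB Require Import structures.
From mathcomp Require Import all_boot all_order all_algebra.
From mathcomp Require Import zify ring.
From Stdlib Require Import Classical ClassicalEpsilon.
Set Implicit Arguments. Unset Strict Implicit. Unset Printing Implicit Defensive.
Import GRing.Theory.
Local Open Scope ring_scope.

Section Series.
Variable k : fieldType.

Lemma sum_nz n (F : nat -> k) :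
  \sum_(i < n) F i != 0 -> exists i, (i < n)%N /\ F i != 0.
Proof.
move=> H; apply: NNPP => Hn; move/eqP: H; apply.
apply: big1 => i _; apply/eqP; apply: negbNE; apply/negP => Hi.
by apply: Hn; exists i.
Qed.

Lemma sum_single n (F : nat -> k) j :
  (j < n)%N -> (forall i, (i < n)%N -> i != j -> F i = 0) ->
  \sum_(i < n) F i = F j.
Proof.
move=> Hj H; rewrite (bigD1 (Ordinal Hj)) //= big1 ?addr0 //.
move=> i Hi; apply: H => //.
Qed.

Lemma sum_two n (F : nat -> k) j1 j2 :
  (j1 < n)%N -> (j2 < n)%N -> j1 != j2 ->
  (forall i, (i < n)%N -> i != j1 -> i != j2 -> F i = 0) ->
  \sum_(i < n) F i = F j1 + F j2.
Proof.
move=> H1 H2 H12 H; rewrite (bigD1 (Ordinal H1)) //= (bigD1 (Ordinal H2)) /=; last first.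
  by rewrite -val_eqE /= eq_sym.
rewrite big1 ?addr0 // => i /andP [Hi1 Hi2]; apply: H => //.
Qed.

Definition sconst (c : k) : series k := fun n => if n == 0%N then c else 0.

Lemma smul_monoL m (x : series k) n :
  smul (smono k m) x n = if (m <= n)%N then x (n - m)%N else 0.
Proof.
rewrite /smul /smono.
case: (leqP m n) => Hmn.
  rewrite (@sum_single _ (fun i => (if i == m then 1 else 0) * x (n - i)%N) m) //.
  - by rewrite eqxx mul1r.
  - by move=> i _ /negbTE ->; rewrite mul0r.
apply: big1 => i _; case: eqP => [E|_]; last by rewrite mul0r.
by move: (ltn_ord i); rewrite E; lia.
Qed.

Lemma smul_monoR m (x : series k) n :
  smul x (smono k m) n = if (m <= n)%N then x (n - m)%N else 0.
Proof.
rewrite /smul /smono.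
case: (leqP m n) => Hmn.
  rewrite (@sum_single _ (fun i => x i * (if (n - i)%N == m then 1 else 0)) (n - m)) //.
  - by rewrite (_ : (n - (n - m))%N = m) ?eqxx ?mulr1 //; lia.
  - lia.
  - move=> i Hi Hne; case: eqP; last by rewrite mulr0.
    move=> E; exfalso; move/eqP: Hne; apply; lia.
apply: big1 => i _; case: eqP => [E|_]; last by rewrite mulr0.
by move: (ltn_ord i); lia.
Qed.

Lemma smul_constL c (x : series k) n : smul (sconst c) x n = c * x n.
Proof.
rewrite /smul /sconst.
rewrite (@sum_single _ (fun i => (if i == 0%N then c else 0) * x (n - i)%N) 0) //.
- by rewrite subn0.
- by move=> i _ /negbTE ->; rewrite mul0r.
Qed.

Lemma smono_mul m1 m2 n :
  smul (smono k m1) (smono k m2) n = smono k (m1 + m2) n.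
Proof.
rewrite smul_monoL /smono; case: leqP => H.
  case: eqP => E; case: eqP => E' //; exfalso; [apply: E'|apply: E]; lia.
case: eqP => // E; lia.
Qed.

Lemma smul_nz (x y : series k) n : smul x y n != 0 ->
  exists i, (i <= n)%N /\ x i != 0 /\ y (n - i)%N != 0.
Proof.
rewrite /smul => /(@sum_nz n.+1 (fun i => x i * y (n - i)%N)) [i [Hi H]]; exists i; split => //.
by rewrite mulf_eq0 negb_or in H; case/andP: H.
Qed.

End Series.

Definition pb (P : Prop) : bool :=
  if excluded_middle_informative P then true else false.
Lemma pbP (P : Prop) : reflect P (pb P).
Proof. by rewrite /pb; case: excluded_middle_informative => H; constructor. Qed.

Section Semigroup.
Variable l : nat.
Variable a : 'I_l -> nat.
Variable f : nat.
Variable cs : seq nat.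
Hypothesis Hpos : forall i, (0 < a i)%N.
Hypothesis Hfrob : is_frobenius a f.
Hypothesis Hsort : sorted ltn cs.
Hypothesis Hcs : forall n : nat, n \in cs <-> isPF a n.
Hypothesis Hsize : (2 <= size cs)%N.

Local Notation inH := (inH a).

Lemma inH0 : inH 0.
Proof. by exists (fun _ => 0%N); rewrite big1. Qed.

Lemma inH_gen i : inH (a i).
Proof.
exists (fun j => (j == i) : nat).
rewrite (bigD1 i) //= ?eqxx mul1n big1 ?addn0 // => j Hj.
by rewrite (negbTE Hj).
Qed.

Lemma inH_add x y : inH x -> inH y -> inH (x + y).
Proof.
move=> [c1 ->] [c2 ->]; exists (fun i => c1 i + c2 i)%N.
by rewrite -big_split /=; apply: eq_bigr => i _; rewrite mulnDl.
Qed.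

Lemma inH_dec h : inH h -> h <> 0%N -> exists i, (a i <= h)%N /\ inH (h - a i).
Proof.
move=> [c Hc] Hh.
have [i Hi] : exists i, (0 < c i)%N.
  apply: NNPP => Hn; apply: Hh; rewrite Hc big1 // => i _.
  have -> : c i = 0%N by apply: NNPP => Hne; apply: Hn; exists i; lia.
  by [].
pose c' := fun j => if j == i then (c i).-1 else c j.
have E : h = (a i + \sum_(j < l) c' j * a j)%N.
  rewrite Hc (bigD1 i) //= [in RHS](bigD1 i) //= /c' eqxx.
  have -> : (\sum_(j < l | j != i) (if j == i then (c i).-1 else c j) * a j =
     \sum_(j < l | j != i) c j * a j)%N by apply: eq_bigr => j /negbTE ->.
  by rewrite -{1}(prednK Hi) mulSn addnA.
exists i; split; first by rewrite E leq_addr.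
by exists c'; rewrite E addKn.
Qed.

Lemma PF_add x h : isPF a x -> inH h -> h <> 0%N -> inH (x + h).
Proof.
move=> [_ Hx] Hh Hh0; have [i [Hi Hr]] := inH_dec Hh Hh0.
have -> : (x + h = (x + a i) + (h - a i))%N by lia.
by apply: inH_add.
Qed.

Lemma gap_le n : ~ inH n -> (n <= f)%N.
Proof. move=> Hn; case: (leqP n f) => // H; by case: Hn; apply: Hfrob.2. Qed.

Lemma big_inH n : (f < n)%N -> inH n.
Proof. exact: Hfrob.2. Qed.

Lemma f_notH : ~ inH f.
Proof. exact: Hfrob.1. Qed.

Lemma PF_le x : isPF a x -> (x <= f)%N.
Proof. by move=> [H _]; apply: gap_le. Qed.

Lemma PF_pos x : isPF a x -> x <> 0%N.
Proof. by move=> [H _] E; apply: H; rewrite E; apply: inH0. Qed.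

Lemma f_PF : isPF a f.
Proof.
split; first exact: f_notH.
move=> i; apply: big_inH; have := Hpos i; lia.
Qed.

Local Notation r := (size cs).
Local Notation m := (size cs).-1.
Local Notation c p := (nth 0%N cs p).

Lemma cs_PF p : (p < r)%N -> isPF a (c p).
Proof. by move=> Hp; apply/Hcs; apply: mem_nth. Qed.

Lemma cs_lt p q : (p < q)%N -> (q < r)%N -> (c p < c q)%N.
Proof.
move=> Hpq Hq; apply: (sorted_ltn_nth ltn_trans 0%N Hsort) => //.
  by rewrite inE; apply: leq_ltn_trans Hq; apply: ltnW.
Qed.

Lemma cs_le p q : (p <= q)%N -> (q < r)%N -> (c p <= c q)%N.
Proof.
rewrite leq_eqVlt => /orP [/eqP -> //|H] Hq; by apply: ltnW; apply: cs_lt.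
Qed.

Lemma cs_inj p q : (p < r)%N -> (q < r)%N -> c p = c q -> p = q.
Proof.
move=> Hp Hq E; case: (ltngtP p q) => // H.
  by have := cs_lt H Hq; rewrite E ltnn.
by have := cs_lt H Hp; rewrite E ltnn.
Qed.

Lemma PF_index x : isPF a x -> exists2 q, (q < r)%N & c q = x.
Proof.
move/Hcs => Hx; exists (index x cs); first by rewrite index_mem.
exact: nth_index.
Qed.

Lemma c_last : c m = f.
Proof.
have [q Hq Eq] := PF_index f_PF.
have Hm : (m < r)%N by rewrite prednK //; lia.
apply/eqP; rewrite eqn_leq; apply/andP; split; first by apply: PF_le; apply: cs_PF.
by rewrite -Eq; apply: cs_le => //; rewrite -ltnS prednK //; lia.
Qed.

Lemma PF_index' x : isPF a x -> x <> f -> exists2 q, (q < m)%N & c q = x.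
Proof.
move=> Hx Hxf; have [q Hq Eq] := PF_index Hx; exists q => //.
rewrite ltn_neqAle -ltnS prednK ?Hq ?andbT //; last lia.
by apply/eqP => E; apply: Hxf; rewrite -Eq E c_last.
Qed.

Lemma c_ltf p : (p < m)%N -> (c p < f)%N.
Proof.
move=> Hp; rewrite -c_last; apply: cs_lt => //; rewrite prednK //; lia.
Qed.

Definition Kset n := ~ ((n <= f)%N /\ inH (f - n)).

Lemma Kset_add n h : Kset n -> inH h -> Kset (n + h).
Proof.
move=> Hn Hh [H1 H2]; apply: Hn; split; first lia.
have -> : (f - n = (f - (n + h)) + h)%N by lia.
by apply: inH_add.
Qed.

Lemma Kset_big n : (f < n)%N -> Kset n.
Proof. move=> H [H1 _]; lia. Qed.

Lemma Kset_H n : inH n -> Kset n.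
Proof.
move=> Hn [H1 H2]; apply: f_notH.
have -> : f = (n + (f - n))%N by lia.
by apply: inH_add.
Qed.

Lemma Kset0 : Kset 0.
Proof. by apply: Kset_H; apply: inH0. Qed.

Lemma notKset n : ~ Kset n -> (n <= f)%N /\ inH (f - n).
Proof. by move=> H; apply: NNPP. Qed.

Lemma PF_comp x : isPF a x -> x <> f -> ~ inH (f - x).
Proof.
move=> Hx Hxf Hc; have Hle := PF_le Hx.
apply: f_notH; have -> : f = (x + (f - x))%N by lia.
apply: PF_add => //; lia.
Qed.

Lemma Kset_exists n : Kset n ->
  exists p, [/\ (p < r)%N, (f - c p <= n)%N & inH (n - (f - c p))].
Proof.
move=> Hn; case: (leqP n f) => Hnf; last first.
  exists m; rewrite c_last subnn subn0; split => //.
    rewrite prednK //; lia.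
  by apply: big_inH.
have Hd : ~ inH (f - n) by move=> H; apply: Hn.
pose P := fun x => pb [/\ (f - n <= x)%N, (x <= f)%N, ~ inH x & inH (x - (f - n))].
have exP : exists x, P x.
  exists (f - n)%N; apply/pbP; split => //; first lia.
  by rewrite subnn; apply: inH0.
have ubP : forall x, P x -> (x <= f)%N by move=> x /pbP [].
case: (ex_maxnP exP ubP) => x /pbP [H1 H2 H3 H4] Hmax.
have HPF : isPF a x.
  split => // i; apply: NNPP => Hi.
  have : P (x + a i)%N.
    apply/pbP; split => //; first lia.
      by apply: gap_le.
    have -> : (x + a i - (f - n) = (x - (f - n)) + a i)%N by lia.
    by apply: inH_add => //; apply: inH_gen.
  move/Hmax; have := Hpos i; lia.
have [p Hp Ep] := PF_index HPF.
exists p; rewrite Ep; split => //; first lia.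
by have -> : (n - (f - x) = x - (f - n))%N by lia.
Qed.



Variable k : fieldType.
Local Notation Rs := (semigroupR (k:=k) a).
Local Notation Ks := (canonK (k:=k) a f cs).
Local Notation Ss := (ringS (k:=k) a f cs).
Local Notation g p := (f - nth 0%N cs p)%N.

Definition Tset y := Ss (smono k y).

Lemma smono_nz n i : smono k n i != 0 -> i = n.
Proof. rewrite /smono; case: (i =P n) => // _; by rewrite eqxx. Qed.

Lemma smono_at n : smono k n n = 1.
Proof. by rewrite /smono eqxx. Qed.

Lemma R_mono n : inH n -> Rs (smono k n).
Proof. by move=> Hn i /smono_nz ->. Qed.

Lemma R_add x y : Rs x -> Rs y -> Rs (sadd x y).
Proof.
move=> Hx Hy n; rewrite /sadd => H.
case: (eqVneq (x n) 0) => Hxn; last exact: Hx.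
by apply: Hy; move: H; rewrite Hxn add0r.
Qed.

Lemma R_mul x y : Rs x -> Rs y -> Rs (smul x y).
Proof.
move=> Hx Hy n /smul_nz [i [Hi [H1 H2]]].
have -> : n = (i + (n - i))%N by lia.
by apply: inH_add; [apply: Hx | apply: Hy].
Qed.

Lemma R_const c0 : Rs (sconst c0).
Proof. move=> n; rewrite /sconst; case: (n =P 0%N) => [-> _|_]; [apply: inH0 | by rewrite eqxx]. Qed.

Lemma R_zero : Rs (szero k).
Proof. by move=> n; rewrite /szero eqxx. Qed.

Lemma R_ext x y : Rs x -> (forall n, x n = y n) -> Rs y.
Proof. by move=> Hx E n; rewrite -E; apply: Hx. Qed.

Lemma K_char x : Ks x <-> (forall n, x n != 0 -> Kset n).
Proof.
split.
  move=> [coef [Hcoef Hx]] n; rewrite Hx => /(@sum_nz k _ (fun i => smul (coef i) (smono k (g i)) n)) [i [Hi]].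
  rewrite smul_monoR; case: leqP => Hg; last by rewrite eqxx.
  move/(Hcoef i Hi) => Hh [Hn1 Hn2].
  have HPF := cs_PF Hi; have Hcf := PF_le HPF.
  apply: HPF.1; have -> : nth 0%N cs i = ((f - n) + (n - g i))%N by lia.
  by apply: inH_add.
move=> Hx.
pose idx n := [pick i : 'I_(size cs) | pb ((g i <= n)%N /\ inH (n - g i))].
pose sel (o : option 'I_(size cs)) (i : nat) := oapp (fun j : 'I_(size cs) => j == i :> nat) false o.
pose coef i := fun j => if sel (idx (j + g i)%N) i then x (j + g i)%N else 0.
exists coef; split.
  move=> i Hi j; rewrite /coef; case: ifP; last by rewrite eqxx.
  rewrite /sel /idx; case: pickP => //= i' /pbP [_ H] /eqP Ei _.
  by move: H; rewrite Ei addnK.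
move=> n.
have Hterm : forall i, smul (coef i) (smono k (g i)) n =
    if (g i <= n)%N && sel (idx n) i then x n else 0.
  move=> i; rewrite smul_monoR /coef; case: leqP => Hg //=.
  by rewrite subnK.
under eq_bigr => i _ do rewrite Hterm.
case E : (idx n) => [j|].
  rewrite (@sum_single k _ (fun i => if (g i <= n)%N && sel (Some j) i then x n else 0) j) //=.
  - move: E; rewrite /idx; case: pickP => //= j' /pbP [H1 _] [<-].
    by rewrite H1 eqxx.
  - by move=> i _ /negbTE; rewrite eq_sym => ->; rewrite andbF.
rewrite big1 //.
  case: (eqVneq (x n) 0) => // /Hx /Kset_exists [p [Hp Hg Hh]].
  move: E; rewrite /idx; case: pickP => // /(_ (Ordinal Hp)) /pbP; by case.
by move=> i _; rewrite andbF.
Qed.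

Lemma K_mono n : Kset n -> Ks (smono k n).
Proof. by move=> Hn; apply/K_char => i /smono_nz ->. Qed.

Lemma R_sub_K x : Rs x -> Ks x.
Proof. by move=> Hx; apply/K_char => n /Hx /Kset_H. Qed.

Lemma K_add x y : Ks x -> Ks y -> Ks (sadd x y).
Proof.
move=> /K_char Hx /K_char Hy; apply/K_char => n; rewrite /sadd => H.
case: (eqVneq (x n) 0) => Hxn; last exact: Hx.
by apply: Hy; move: H; rewrite Hxn add0r.
Qed.

Lemma K_mul x y : Rs x -> Ks y -> Ks (smul x y).
Proof.
move=> Hx /K_char Hy; apply/K_char => n /smul_nz [i [Hi [H1 H2]]].
have -> : n = ((n - i) + i)%N by lia.
by apply: Kset_add; [apply: Hy | apply: Hx].
Qed.

Lemma K_ext x y : Ks x -> (forall n, x n = y n) -> Ks y.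
Proof. by move=> /K_char Hx E; apply/K_char => n; rewrite -E; apply: Hx. Qed.

Lemma K_zero : Ks (szero k).
Proof. by apply: R_sub_K; apply: R_zero. Qed.

Lemma T_K n : Kset n -> Tset n.
Proof. by move=> Hn; apply: RG_Q; apply: K_mono. Qed.

Lemma T_add x y : Tset x -> Tset y -> Tset (x + y).
Proof.
move=> Hx Hy; apply: (RG_ext (RG_mul Hx Hy)) => n; exact: smono_mul.
Qed.

Lemma S_supp s : Ss s -> forall n, s n != 0 -> Tset n.
Proof.
elim => {s} [x Hx|x Hx|x y _ IHx _ IHy|x y _ IHx _ IHy|x y _ IH E] n.
- by move/Hx => /Kset_H; apply: T_K.
- by move/K_char: Hx => Hx /Hx; apply: T_K.
- rewrite /sadd => H; case: (eqVneq (x n) 0) => Hxn; last exact: IHx.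
  by apply: IHy; move: H; rewrite Hxn add0r.
- move/smul_nz => [i [Hi [H1 H2]]].
  have -> : n = (i + (n - i))%N by lia.
  by apply: T_add; [apply: IHx | apply: IHy].
- by rewrite -E; apply: IH.
Qed.

Lemma T_list (ls : seq nat) : (forall e, e \in ls -> Kset e) -> Tset (sumn ls).
Proof.
elim: ls => [_|e ls IH H] /=; first by apply: T_K; apply: Kset0.
apply: T_add; first by apply: T_K; apply: H; rewrite inE eqxx.
by apply: IH => e' He'; apply: H; rewrite inE He' orbT.
Qed.

Lemma S_list s : Ss s -> forall n, s n != 0 ->
  exists ls : seq nat, (forall e, e \in ls -> Kset e) /\ sumn ls = n.
Proof.
elim => {s} [x Hx|x Hx|x y _ IHx _ IHy|x y _ IHx _ IHy|x y _ IH E] n.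
- move/Hx => /Kset_H Hn; exists [:: n]; split; last by rewrite /= addn0.
  by move=> e; rewrite inE => /eqP ->.
- move/K_char: Hx => Hx /Hx Hn; exists [:: n]; split; last by rewrite /= addn0.
  by move=> e; rewrite inE => /eqP ->.
- rewrite /sadd => H; case: (eqVneq (x n) 0) => Hxn; last exact: IHx.
  by apply: IHy; move: H; rewrite Hxn add0r.
- move/smul_nz => [i [Hi [H1 H2]]].
  have [l1 [Hl1 E1]] := IHx _ H1; have [l2 [Hl2 E2]] := IHy _ H2.
  exists (l1 ++ l2); split; last by rewrite sumn_cat E1 E2; lia.
  by move=> e; rewrite mem_cat => /orP [/Hl1|/Hl2].
- by rewrite -E; apply: IH.
Qed.

Lemma T_list_of n : Tset n ->
  exists ls : seq nat, (forall e, e \in ls -> Kset e) /\ sumn ls = n.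
Proof. by move=> Hn; apply: (S_list Hn); rewrite smono_at oner_neq0. Qed.

Lemma Rsubmod_K : Rsubmod Rs Ks.
Proof.
split; [exact: K_zero | exact: K_add | exact: K_mul | exact: K_ext].
Qed.

Lemma Rsubmod_S : Rsubmod Rs Ss.
Proof.
split.
- by apply: RG_P; apply: R_zero.
- by move=> x y Hx Hy; apply: RG_add.
- by move=> r0 x Hr Hx; apply: RG_mul => //; apply: RG_P.
- by move=> x y Hx E; apply: RG_ext Hx E.
Qed.

Definition thr y x := Ss x /\ forall n, x n != 0 -> Kset n \/ (y <= n)%N.

Lemma Rsubmod_thr y : Rsubmod Rs (thr y).
Proof.
have [S0 S1 S2 S3] := Rsubmod_S.
split.
- by split => // n; rewrite /szero eqxx.
- move=> x z [Hx Hx'] [Hz Hz']; split; first exact: S1.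
  move=> n; rewrite /sadd => H; case: (eqVneq (x n) 0) => Hxn; last exact: Hx'.
  by apply: Hz'; move: H; rewrite Hxn add0r.
- move=> r0 x Hr [Hx Hx']; split; first exact: S2.
  move=> n /smul_nz [i [Hi [H1 H2]]].
  have -> : n = ((n - i) + i)%N by lia.
  case: (Hx' _ H2) => H; [left; apply: Kset_add => //; exact: Hr | right; lia].
- move=> x z [Hx Hx'] E; split; first exact: S3 Hx E.
  by move=> n; rewrite -E; apply: Hx'.
Qed.

Lemma smono_K n : Ks (smono k n) -> Kset n.
Proof. by move/K_char => H; apply: H; rewrite smono_at oner_neq0. Qed.

Lemma chain3 y1 y2 y3 : (y1 < y2)%N -> (y2 < y3)%N ->
  Tset y1 -> Tset y2 -> Tset y3 -> ~ Kset y1 -> ~ Kset y2 -> ~ Kset y3 ->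
  has_chain Rs Ks Ss 3.
Proof.
move=> H12 H23 T1 T2 T3 K1 K2 K3.
exists (fun i => if i == 0%N then Ks else if i == 1%N then thr y3
                 else if i == 2%N then thr y2 else Ss).
split => //.
- case=> [|[|[|[|i]]]] //= _; [exact: Rsubmod_K | exact: Rsubmod_thr
    | exact: Rsubmod_thr | exact: Rsubmod_S].
- case=> [|[|[|i]]] //= _; split.
  + move=> x Hx; split; first exact: RG_Q.
    by move=> n Hn; left; move/K_char: Hx; apply.
  + exists (smono k y3); split; last by move/smono_K.
    by split => // n /smono_nz ->; right.
  + by move=> x [Hx Hx']; split => // n /Hx' [H|H]; [left|right; lia].
  + exists (smono k y2); split.
      by split => // n /smono_nz ->; right.
    move=> [_ /(_ y2)]; rewrite smono_at oner_neq0 => /(_ isT) [//|]; lia.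
  + by move=> x [].
  + exists (smono k y1); split => //.
    move=> [_ /(_ y1)]; rewrite smono_at oner_neq0 => /(_ isT) [//|]; lia.
Qed.

Lemma no3 : ~ has_chain Rs Ks Ss 3 ->
  forall y1 y2 y3, Tset y1 -> Tset y2 -> Tset y3 ->
  ~ Kset y1 -> ~ Kset y2 -> ~ Kset y3 -> y1 = y2 \/ y1 = y3 \/ y2 = y3.
Proof.
move=> Hn y1 y2 y3 T1 T2 T3 K1 K2 K3.
apply: NNPP => H; apply: Hn.
have D12 : y1 <> y2 by move=> E; apply: H; left.
have D13 : y1 <> y3 by move=> E; apply: H; right; left.
have D23 : y2 <> y3 by move=> E; apply: H; right; right.
case: (ltngtP y1 y2) => h12; case: (ltngtP y2 y3) => h23;
  case: (ltngtP y1 y3) => h13; try (exfalso; lia);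
  first [ apply: (@chain3 y1 y2 y3) => //; lia
        | apply: (@chain3 y1 y3 y2) => //; lia
        | apply: (@chain3 y2 y1 y3) => //; lia
        | apply: (@chain3 y2 y3 y1) => //; lia
        | apply: (@chain3 y3 y1 y2) => //; lia
        | apply: (@chain3 y3 y2 y1) => //; lia ].
Qed.

Lemma chain2 : has_chain Rs Ks Ss 2 ->
  exists y, [/\ Tset y, ~ Kset y & y <> f].
Proof.
move=> [C [C0 C2 Csub Cinc]].
apply: NNPP => Hno.
have Hy : forall y, Tset y -> ~ Kset y -> y = f.
  by move=> y Ty Ky; apply: NNPP => Hyf; apply: Hno; exists y.
have [I01 [x1 [Hx1 Hnx1]]] := Cinc 0%N isT.
have [I12 [x2 [Hx2 Hnx2]]] := Cinc 1%N isT.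
have [_ M1 M2 M3] := Csub 1%N isT.
have Sx1 : Ss x1 by apply/C2; apply: I12.
have Sx2 : Ss x2 by apply/C2.
have Hf1 : x1 f != 0.
  apply/negP => /eqP Hz; apply: Hnx1; apply/C0; apply/K_char => n Hn.
  apply: NNPP => Kn; have := Hy n (S_supp Sx1 Hn) Kn; move=> E.
  by move: Hn; rewrite E Hz eqxx.
pose lam := x2 f / x1 f.
pose w := fun n => x2 n - lam * x1 n.
have Kw : Ks w.
  apply/K_char => n Hn; apply: NNPP => Kn.
  have Tn : Tset n.
    case: (eqVneq (x2 n) 0) => H2; last exact: S_supp Sx2 _ H2.
    case: (eqVneq (x1 n) 0) => H1; last exact: S_supp Sx1 _ H1.
    by move: Hn; rewrite /w H1 H2 mulr0 subrr eqxx.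
  have E := Hy n Tn Kn; move: Hn; rewrite /w E /lam.
  by rewrite mulfVK // subrr eqxx.
have Cw : C 1%N w by apply: I01; apply/C0.
have Cl : C 1%N (smul (sconst lam) x1) by apply: M2 => //; apply: R_const.
apply: Hnx2; apply: M3 (M1 _ _ Cw Cl) _ => n.
by rewrite /sadd smul_constL /w subrK.
Qed.

Local Notation Cs := (conductor (k:=k) a f cs).

Lemma Kset_g p : (p < size cs)%N -> Kset (g p).
Proof.
move=> Hp [H1 H2]; have HPF := cs_PF Hp; have := PF_le HPF => Hle.
by apply: HPF.1; move: H2; rewrite (_ : (f - (f - nth 0%N cs p) = nth 0%N cs p)%N) //; lia.
Qed.

Lemma g_notH p : (p < (size cs).-1)%N -> ~ inH (g p).
Proof.
move=> Hp; have Hp' : (p < size cs)%N by lia.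
apply: PF_comp; first exact: cs_PF.
by have := c_ltf Hp; lia.
Qed.

Lemma Kset_c p : (p < (size cs).-1)%N -> Kset (nth 0%N cs p).
Proof. by move=> Hp [_ H]; apply: (g_notH Hp). Qed.

Lemma Tf : Tset f.
Proof.
have Hm : (0 < (size cs).-1)%N by lia.
have := T_add (T_K (Kset_g (p:=0) ltac:(lia))) (T_K (Kset_c Hm)).
by rewrite subnK //; apply: PF_le; apply: cs_PF; lia.
Qed.

Section Alpha.
Variable al : nat.
Hypothesis Hal : inH al.
Hypothesis Hal0 : al <> 0%N.
Hypothesis Half : (al <= f)%N.
Hypothesis HTK : forall y, Tset y -> ~ Kset y -> y = f \/ y = (f - al)%N.
Hypothesis HfaT : Tset (f - al).

Lemma Kres e h : Kset e -> inH h -> h <> 0%N -> h <> al -> inH (e + h).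
Proof.
move=> He Hh H0 Ha; apply: NNPP => Hn; have Hle := gap_le Hn.
have Kz : Kset (f - e - h).
  move=> [_ Hz]; apply: Hn; move: Hz; rewrite (_ : (f - (f - e - h) = e + h)%N) //; lia.
have := T_add (T_K He) (T_K Kz); rewrite (_ : (e + (f - e - h) = f - h)%N); last lia.
move=> Tfh; have Kfh : ~ Kset (f - h).
  by move=> H; apply: H; split; [lia | rewrite (_ : (f - (f - h) = h)%N) //; lia].
case: (HTK Tfh Kfh); lia.
Qed.

Lemma notPF_al x : ~ inH x -> Kset x -> ~ isPF a x -> ~ inH (x + al).
Proof.
move=> Hx Kx HPF; apply: NNPP => Hxa; apply: HPF; split => // i.
case: (eqVneq (a i) al) => [->|Hne] //; first by apply: NNPP.
apply: Kres => //; first exact: inH_gen.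
  by have := Hpos i; lia.
by apply/eqP.
Qed.

Lemma notPF_ex x : ~ isPF a x -> ~ inH x -> exists i, ~ inH (x + a i).
Proof.
move=> H Hx; apply: NNPP => Hn; apply: H; split => // i.
by apply: NNPP => Hi; apply: Hn; exists i.
Qed.

Lemma Ndec x : Kset x -> ~ inH x -> isPF a x \/ isPF a (f - x).
Proof.
move=> Kx Hx; have Hle := gap_le Hx.
apply: NNPP => Hn.
have H1 : ~ isPF a x by move=> H; apply: Hn; left.
have H2 : ~ isPF a (f - x) by move=> H; apply: Hn; right.
have Hfx : ~ inH (f - x) by move=> H; apply: Kx.
have Kfx : Kset (f - x).
  by move=> [_]; rewrite (_ : (f - (f - x) = x)%N) //; lia.
have A1 := notPF_al Hx Kx H1.
have A2 := notPF_al Hfx Kfx H2.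
have L1 := gap_le A1; have L2 := gap_le A2.
have Ky : Kset (x - al).
  by move=> [_]; rewrite (_ : (f - (x - al) = f - x + al)%N) //; lia.
have Kz : Kset (f - x - al).
  by move=> [_]; rewrite (_ : (f - (f - x - al) = x + al)%N) //; lia.
have := T_add (T_K Ky) (T_K Kz).
rewrite (_ : (x - al + (f - x - al) = f - (al + al))%N); last lia.
move=> T2; have K2 : ~ Kset (f - (al + al)).
  move=> H; apply: H; split; first lia.
  by rewrite (_ : (f - (f - (al + al)) = al + al)%N); [apply: inH_add | lia].
case: (HTK T2 K2); lia.
Qed.

Lemma fa_dec : exists e1 e2, [/\ Kset e1, Kset e2 & (e1 + e2 = f - al)%N].
Proof.
have [ls [Hls E]] := T_list_of HfaT.
elim: ls Hls E => [_ /= E|e ls IH Hls /= E].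
  by exists 0%N, 0%N; split; [exact: Kset0 | exact: Kset0 | lia].
have Ke : Kset e by apply: Hls; rewrite inE eqxx.
have Hls' : forall e', e' \in ls -> Kset e' by move=> e' H; apply: Hls; rewrite inE H orbT.
have Tl := T_list Hls'.
case: (classic (Kset (sumn ls))) => Kl.
  by exists e, (sumn ls); split.
case: (HTK Tl Kl) => El; first lia.
apply: IH => //; lia.
Qed.

Lemma Aprime h t : inH h -> h <> 0%N -> h <> al -> Tset t -> inH (h + t).
Proof.
move=> Hh H0 Ha Tt.
case: (classic (Kset t)) => Kt; first by rewrite addnC; apply: Kres.
case: (HTK Tt Kt) => ->; first by apply: big_inH; lia.
case: (leqP h al) => Hha; last by apply: big_inH; lia.
have [e1 [e2 [K1 K2 E]]] := fa_dec.
have U1 := Kres K1 Hh H0 Ha.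
have U2 := Kres K2 Hh H0 Ha.
case: (eqVneq (e1 + h)%N al) => Ea1.
  case: (eqVneq (e2 + h)%N al) => Ea2.
    (* e1 = e2 = al - h : 3 e1 = f - h *)
    have T3 := T_add (T_add (T_K K1) (T_K K1)) (T_K K1).
    have K3 : ~ Kset (e1 + e1 + e1).
      move=> H; apply: H; split; first lia.
      by rewrite (_ : (f - (e1 + e1 + e1) = h)%N) //; lia.
    case: (HTK T3 K3); lia.
  have := Kres K1 U2 ltac:(lia) ltac:(by apply/eqP).
  by rewrite (_ : (e1 + (e2 + h) = h + (f - al))%N) //; lia.
have := Kres K2 U1 ltac:(lia) ltac:(by apply/eqP).
by rewrite (_ : (e2 + (e1 + h) = h + (f - al))%N) //; lia.
Qed.

Lemma atom i : (0 < i < al)%N -> inH i -> ~ inH (al - i).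
Proof.
move=> Hi Hh Hai.
have := Aprime Hh ltac:(lia) ltac:(lia) HfaT => H.
apply: f_notH; have := inH_add Hai H.
by rewrite (_ : (al - i + (i + (f - al)) = f)%N) //; lia.
Qed.

Lemma c_char z : Cs z <-> [/\ Rs z, z 0%N = 0 & z al = 0].
Proof.
split.
  move=> Hz; split.
  - have := Hz _ (T_K Kset0) => H n Hn; apply: H.
    by rewrite smul_monoR subn0.
  - apply/eqP; apply: negbNE; apply/negP => Hn.
    have := Hz _ Tf f; rewrite smul_monoR leqnn subnn => /(_ Hn).
    exact: f_notH.
  - apply/eqP; apply: negbNE; apply/negP => Hn.
    have := Hz _ HfaT f; rewrite smul_monoR leq_subr.
    rewrite (_ : (f - (f - al) = al)%N); last lia.
    move=> /(_ Hn); exact: f_notH.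
move=> [Rz Z0 Za] s Ss n /smul_nz [i [Hi [H1 H2]]].
have Tn := S_supp Ss H2.
have -> : n = (i + (n - i))%N by lia.
apply: Aprime => //; first exact: Rz.
  by move=> E; move: H1; rewrite E Z0 eqxx.
by move=> E; move: H1; rewrite E Za eqxx.
Qed.

Lemma mul_at0 (x y : series k) : smul x y 0%N = x 0%N * y 0%N.
Proof. by rewrite /smul big_ord1 /=. Qed.

Lemma mul_atal (x y : series k) : Rs x -> Rs y ->
  smul x y al = x 0%N * y al + x al * y 0%N.
Proof.
move=> Rx Ry; rewrite /smul.
rewrite (@sum_two k _ (fun i => x i * y (al - i)%N) 0 al) //=.
- by rewrite subn0 subnn.
- lia.
- move=> i Hi /eqP H0 /eqP Ha; case: (eqVneq (x i) 0) => [->|Hx]; first by rewrite mul0r.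
  case: (eqVneq (y (al - i)%N) 0) => [->|Hy]; first by rewrite mulr0.
  exfalso; apply: (@atom i); last exact: Ry.
    by apply/andP; split; lia.
  exact: Rx.
Qed.

Lemma Rs_ssub u w : Rs u -> Rs w -> Rs (ssub u w).
Proof.
move=> Ru Rw; apply: R_add => // n; rewrite /sopp oppr_eq0; exact: Rw.
Qed.

Lemma cong u w : Rs u -> Rs w -> (Cs (ssub u w) <-> u 0%N = w 0%N /\ u al = w al).
Proof.
move=> Ru Rw; rewrite c_char /ssub /sadd /sopp; split.
  by move=> [_ /eqP H1 /eqP H2]; split; apply/eqP; rewrite -subr_eq0.
by move=> [H1 H2]; split; [exact: Rs_ssub | rewrite H1 subrr | rewrite H2 subrr].
Qed.

Lemma cong0 u : Rs u -> (Cs u <-> u 0%N = 0 /\ u al = 0).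
Proof. by move=> Ru; rewrite c_char; split => [[]|[]]. Qed.

Lemma lt_mr p : (p < (size cs).-1)%N -> (p < size cs)%N.
Proof. move=> H; apply: (leq_trans H); exact: leq_pred. Qed.

Local Notation m := (size cs).-1.
Local Notation c p := (nth 0%N cs p).

Lemma fwd_a (psi : series k -> 'I_m -> series k) :
  (forall x, Ks x -> forall j, Rs (psi x j)) ->
  (forall x y, Ks x -> Ks y -> forall j,
      Cs (ssub (ssub (psi (sadd x y) j) (psi x j)) (psi y j))) ->
  (forall r x, Rs r -> Ks x -> forall j,
      Cs (ssub (psi (smul r x) j) (smul r (psi x j)))) ->
  (forall v : 'I_m -> series k, (forall j, Rs (v j)) ->
      exists x, Ks x /\ forall j, Cs (ssub (psi x j) (v j))) ->
  (forall x, Ks x -> ((forall j, Cs (psi x j)) <-> Rs x)) ->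
  forall p q, (p < m)%N -> (q < m)%N -> c p <> (f - c q)%N.
Proof.
move=> P1 P3 P4 P5 P6 p q Hp Hq E.
have Hp' : (p < size cs)%N by lia.
have Hq' : (q < size cs)%N by lia.
have A3 : forall x y j, Ks x -> Ks y ->
    psi (sadd x y) j 0%N = psi x j 0%N + psi y j 0%N /\
    psi (sadd x y) j al = psi x j al + psi y j al.
  move=> x y j Kx Ky; have := P3 x y Kx Ky j.
  rewrite c_char /ssub /sadd /sopp => [[_ /eqP H0 /eqP Ha]].
  by split; apply/eqP; rewrite -subr_eq0 opprD addrA.
have A4 : forall r x j, Rs r -> Ks x ->
    psi (smul r x) j 0%N = r 0%N * psi x j 0%N /\
    psi (smul r x) j al = r 0%N * psi x j al + r al * psi x j 0%N.
  move=> r x j Rr Kx; have := P4 r x Rr Kx j.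
  rewrite (cong (P1 _ (K_mul Rr Kx) j) (R_mul Rr (P1 _ Kx j))).
  by rewrite mul_at0 mul_atal //; apply: P1.
have Kg : Kset (f - c q)%N by apply: Kset_g.
set gq := (f - c q)%N in E Kg.
have Kx : Ks (smono k gq) by apply: K_mono.
have Ral : Rs (smono k al) by apply: R_mono.
have Rax : Rs (smul (smono k al) (smono k gq)).
  move=> n; rewrite smul_monoL; case: leqP => Hn; last by rewrite eqxx.
  move/smono_nz => En; have -> : n = (c p + al)%N by lia.
  apply: PF_add => //; exact: cs_PF.
have W0 : forall j, psi (smono k gq) j 0%N = 0.
  move=> j; have := (P6 _ (R_sub_K Rax)).2 Rax j.
  rewrite (cong0 (P1 _ (R_sub_K Rax) j)) => [[_]].
  have [_ ->] := A4 _ _ j Ral Kx.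
  have Hm0 : smono k al 0%N = 0 by rewrite /smono; case: (0%N =P al) => //; lia.
  by rewrite Hm0 smono_at mul0r add0r mul1r.
have [y [Ky Hy]] := P5 (fun j => sconst (psi (smono k gq) j al)) (fun j => @R_const (psi (smono k gq) j al)).
have Y0 : forall j, psi y j 0%N = psi (smono k gq) j al.
  move=> j; have := Hy j; rewrite (cong (P1 _ Ky j) (@R_const (psi (smono k gq) j al))) => [[-> _]].
  by rewrite /sconst eqxx.
have Ku : Ks (smul (smono k al) y) by apply: K_mul.
have Rm1 : Rs (sconst (-1 : k)) by apply: R_const.
have Kv : Ks (smul (sconst (-1)) (smul (smono k al) y)) by apply: K_mul.
set z := sadd (smono k gq) (smul (sconst (-1)) (smul (smono k al) y)).
have Kz : Ks z by apply: K_add.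
have Rz : Rs z.
  apply/(P6 _ Kz) => j; rewrite (cong0 (P1 _ Kz j)).
  have [Z0 Za] := A3 _ _ j Kx Kv.
  have [V0 Va] := A4 _ _ j Rm1 Ku.
  have [U0 Ua] := A4 _ _ j Ral Ky.
  have Hs1 : sconst (-1 : k) al = 0 by rewrite /sconst; case: (al =P 0%N).
  have Hs0 : sconst (-1 : k) 0%N = -1 by [].
  have Hm0 : smono k al 0%N = 0 by rewrite /smono; case: (0%N =P al) => //; lia.
  rewrite Z0 Za V0 Va U0 Ua W0 Y0 Hs1 Hs0 Hm0 smono_at.
  by split; ring.
have : z gq != 0.
  rewrite /z /sadd smul_constL smul_monoL smono_at.
  case: leqP => Hle; last by rewrite mulr0 addr0 oner_neq0.
  have -> : y (gq - al)%N = 0.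
    case: (eqVneq (y (gq - al)%N) 0) => // Hne; exfalso.
    have K := (proj1 (K_char y) Ky) _ Hne.
    apply: K; split; first lia.
    have Hcq := PF_le (cs_PF Hq').
    rewrite (_ : (f - (gq - al) = c q + al)%N); last by rewrite /gq; lia.
    apply: PF_add => //; exact: cs_PF.
  by rewrite mulr0 addr0 oner_neq0.
by move/Rz; apply: g_notH.
Qed.

Lemma fwd_b : (forall p q, (p < m)%N -> (q < m)%N -> c p <> (f - c q)%N) ->
  forall p, (p < m)%N ->
  (exists j, a j = al) /\ exists2 q, (q < m)%N & c q = (f - c p + al)%N.
Proof.
move=> Ha p Hp; have Hp' : (p < size cs)%N by lia.
have Kg := Kset_g Hp'; have Hg := g_notH Hp.
have HPF := cs_PF Hp'; have Hcf := PF_le HPF; have Hc0 := PF_pos HPF.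
have NP : ~ isPF a (f - c p).
  move=> H; have [q Hq Eq] := PF_index' H ltac:(lia).
  by apply: (Ha q p).
split.
  have [i Hi] := notPF_ex NP Hg; exists i.
  apply: NNPP => Hne; apply: Hi; apply: Kres => //; first exact: inH_gen.
  by have := Hpos i; lia.
have A := notPF_al Hg Kg NP.
have Hle := gap_le A.
case: (Ndec (Kset_add Kg Hal) A) => H.
  have [q Hq Eq] := PF_index' H ltac:(move=> E; apply: HPF.1; rewrite (_ : c p = al) //; lia).
  by exists q.
exfalso; apply: HPF.1.
have := PF_add H Hal Hal0.
by rewrite (_ : (f - (f - c p + al) + al = c p)%N) //; lia.
Qed.

Lemma fwd_c : (forall p q, (p < m)%N -> (q < m)%N -> c p <> (f - c q)%N) ->
  exists j : 'I_l, forall i : nat, (1 <= i <= m)%N ->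
     (f + a j = c i.-1 + c (size cs - i).-1)%N.
Proof.
move=> Ha.
have Hm : (0 < m)%N by lia.
have [[j Hj] _] := fwd_b Ha Hm.
exists j => i Hi; rewrite Hj.
pose s p := index (f - c p + al)%N cs.
have Hs : forall p, (p < m)%N -> (s p < m)%N /\ c (s p) = (f - c p + al)%N.
  move=> p Hp; have [_ [q Hq Eq]] := fwd_b Ha Hp.
  have Hin : (f - c p + al)%N \in cs.
    by rewrite -Eq; apply: mem_nth; apply: (ltn_trans Hq); rewrite prednK ?ltnSn // (ltn_trans _ Hsize).
  have E1 : c (s p) = (f - c p + al)%N by apply: nth_index.
  have Hsr : (s p < size cs)%N by rewrite index_mem.
  have -> : s p = q by apply: cs_inj => //; [lia | rewrite E1 Eq].
  by split.
have Hdec : forall p p', (p < p')%N -> (p' < m)%N -> (s p' < s p)%N.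
  move=> p p' Hpp Hp'; have Hp : (p < m)%N by lia.
  have [Hs1 E1] := Hs p Hp; have [Hs2 E2] := Hs p' Hp'.
  have Hlt := cs_lt Hpp ltac:(lia).
  have Hcf := PF_le (cs_PF (p := p') ltac:(lia)).
  case: (ltnP (s p') (s p)) => // Hle; exfalso.
  have := cs_le Hle ltac:(lia); rewrite E1 E2; lia.
have Up : forall p, (p < m)%N -> (s p + p <= m.-1)%N.
  elim=> [H0|p IH Hp]; first by have := (Hs 0%N H0).1; lia.
  have := IH ltac:(lia); have := Hdec p p.+1 (ltnSn p) Hp; lia.
have Lo : forall d, (d < m)%N -> (d <= s (m.-1 - d))%N.
  elim=> [//|d IH Hd].
  have := IH ltac:(lia).
  have := Hdec (m.-1 - d.+1)%N (m.-1 - d)%N ltac:(lia) ltac:(lia); lia.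
have Hp : (i.-1 < m)%N by lia.
have Es : s i.-1 = (m.-1 - i.-1)%N.
  have := Up _ Hp; have := Lo (m.-1 - i.-1)%N ltac:(lia).
  rewrite (_ : (m.-1 - (m.-1 - i.-1) = i.-1)%N); last lia.
  lia.
have [_ E] := Hs _ Hp; rewrite Es in E.
rewrite (_ : (size cs - i).-1 = (m.-1 - i.-1)%N); last lia.
rewrite E; have := PF_le (cs_PF (p := i.-1) ltac:(lia)); lia.
Qed.

Lemma sum_nz_ord n (F : 'I_n -> k) : \sum_(i < n) F i != 0 -> exists i, F i != 0.
Proof.
move=> H; apply: NNPP => Hn; move/eqP: H; apply.
apply: big1 => i _; apply/eqP; apply: negbNE; apply/negP => Hi.
by apply: Hn; exists i.
Qed.

Lemma sum_single_ord n (F : 'I_n -> k) j :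
  (forall i, i != j -> F i = 0) -> \sum_(i < n) F i = F j.
Proof. by move=> H; rewrite (bigD1 j) //= big1 ?addr0 // => i /H. Qed.

Section Backward.
Hypothesis Hcond : forall p, (p < m)%N -> (f + al = c p + c (m.-1 - p))%N.

Lemma G1 p : (p < m)%N -> (f - c p + al = c (m.-1 - p))%N.
Proof.
move=> Hp; have := Hcond Hp; have := PF_le (cs_PF (p := p) ltac:(lia)); lia.
Qed.

Lemma cle p : (p < m)%N -> (c p <= f)%N.
Proof. move=> Hp; apply: PF_le; apply: cs_PF; lia. Qed.

Lemma g_inj p q : (p < m)%N -> (q < m)%N -> g p = g q -> p = q.
Proof.
move=> Hp Hq E; apply: cs_inj; try lia.
have := cle Hp; have := cle Hq; lia.
Qed.

Lemma g_ne p q : (p < m)%N -> (q < m)%N -> g p <> (g q + al)%N.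
Proof.
move=> Hp Hq E; have Hq' : (q < size cs)%N by lia.
apply: (cs_PF Hq').1.
have := cle Hp; have := cle Hq => h1 h2.
rewrite (_ : c q = c p + al)%N; last lia.
apply: PF_add => //; apply: cs_PF; lia.
Qed.

Lemma ga_notH p : (p < m)%N -> ~ inH (g p + al).
Proof.
move=> Hp; rewrite G1 //; apply: (cs_PF (p := (m.-1 - p)) ltac:(lia)).1.
Qed.

Lemma Bdec x : Kset x -> ~ inH x -> exists2 p, (p < m)%N & x = g p \/ x = (g p + al)%N.
Proof.
move=> Kx Hx; have Hxf := gap_le Hx.
have Hx0 : x <> 0%N by move=> E; apply: Hx; rewrite E; apply: inH0.
have Hxnf : x <> f by move=> E; apply: Kx; split => //; rewrite E subnn; apply: inH0.
case: (Ndec Kx Hx) => H.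
  have [q Hq Eq] := PF_index' H Hxnf.
  have Hq' : (m.-1 - q < m)%N by lia.
  exists (m.-1 - q)%N => //; right.
  have := G1 Hq'; have -> : (m.-1 - (m.-1 - q) = q)%N by lia.
  by move=> G; rewrite -Eq -G.
have Hfx : (f - x)%N <> f by lia.
have [q Hq Eq] := PF_index' H Hfx.
exists q => //; left; rewrite Eq; lia.
Qed.

Definition psiB (x : series k) (j : 'I_m) : series k :=
  fun n => if n == 0%N then x (g j) else if n == al then x (g j + al)%N else 0.

Lemma psiB0 x j : psiB x j 0%N = x (g j).
Proof. by []. Qed.

Lemma psiBal x j : psiB x j al = x (g j + al)%N.
Proof. rewrite /psiB; case: (al =P 0%N) => // _; by rewrite eqxx. Qed.

Lemma psiB_R x j : Rs (psiB x j).
Proof.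
move=> n; rewrite /psiB; case: (n =P 0%N) => [-> _|_]; first exact: inH0.
by case: (n =P al) => [-> _|_] //; rewrite eqxx.
Qed.

Lemma conv0 (r x : series k) (j : 'I_m) : Rs r -> Ks x ->
  smul r x (g j) = r 0%N * x (g j).
Proof.
move=> Rr /K_char Kx; rewrite /smul.
rewrite (@sum_single k _ (fun i => r i * x (g j - i)%N) 0) ?subn0 //.
move=> i Hi /eqP Hi0; case: (eqVneq (r i) 0) => [->|Hr]; first by rewrite mul0r.
case: (eqVneq (x (g j - i)%N) 0) => [->|Hxn]; first by rewrite mulr0.
exfalso; apply: (Kx _ Hxn); split; first lia.
have Hcf := cle (ltn_ord j).
have HH : (i <= g j)%N by lia.
have HH2 : (f - (g j - i) = c j + i)%N by clear -Hcf HH; lia.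
rewrite HH2.
by apply: PF_add => //; [apply: cs_PF; apply: lt_mr | apply: Rr].
Qed.

Lemma conval (r x : series k) (j : 'I_m) : Rs r -> Ks x ->
  smul r x (g j + al)%N = r 0%N * x (g j + al)%N + r al * x (g j).
Proof.
move=> Rr /K_char Kx; rewrite /smul.
rewrite (@sum_two k _ (fun i => r i * x (g j + al - i)%N) 0 al) ?subn0 //.
- by rewrite addnK.
- lia.
- by apply/eqP; lia.
move=> i Hi /eqP Hi0 /eqP Hia; case: (eqVneq (r i) 0) => [->|Hr]; first by rewrite mul0r.
case: (eqVneq (x (g j + al - i)%N) 0) => [->|Hxn]; first by rewrite mulr0.
exfalso; apply: (ga_notH (ltn_ord j)).
have := Kres (Kx _ Hxn) (Rr _ Hr) Hi0 Hia.
by rewrite subnK //; lia.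
Qed.

Lemma bwd : quot_iso_pow Rs Ks Rs Cs m.
Proof.
exists psiB; split; first by move=> x _ j; apply: psiB_R.
split.
  move=> x y _ E j; rewrite (cong (@psiB_R _ _) (@psiB_R _ _)).
  by rewrite !psiB0 !psiBal !E.
split.
  move=> x y _ _ j.
  rewrite (cong (Rs_ssub (@psiB_R _ _) (@psiB_R _ _)) (@psiB_R _ _)).
  rewrite /ssub /sadd /sopp !psiB0 !psiBal.
  by split; ring.
split.
  move=> r0 x Rr Kx j.
  rewrite (cong (@psiB_R _ _) (R_mul Rr (@psiB_R _ _))).
  rewrite mul_at0 mul_atal //; last exact: psiB_R.
  rewrite !psiB0 !psiBal conv0 // conval //.
split.
  move=> v Rv.
  pose x := fun n => \sum_(p < m) ((if n == g p then v p 0%N else 0)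
                                 + (if n == (g p + al)%N then v p al else 0)).
  exists x; split.
    apply/K_char => n /sum_nz_ord [p].
    case: (n =P g p) => [->|_]; first by move=> _; apply: Kset_g; apply: lt_mr.
    case: (n =P (g p + al)%N) => [->|_]; last by rewrite addr0 eqxx.
    by move=> _; apply: Kset_add; [apply: Kset_g; apply: lt_mr | exact: Hal].
  move=> j; rewrite (cong (@psiB_R _ _) (Rv j)) psiB0 psiBal /x.
  split.
    rewrite (sum_single_ord (j := j)) ?eqxx.
      case: (g j =P (g j + al)%N) => [E|_]; first lia.
      by rewrite addr0.
    move=> p Hp; case: (g j =P g p) => [E|_].
      exfalso; move/eqP: Hp => Hp; apply: Hp; apply: val_inj.
      by apply: g_inj; [exact: ltn_ord | exact: ltn_ord | rewrite E].
    case: (g j =P (g p + al)%N) => [E|_]; last by rewrite addr0.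
    by exfalso; apply: (g_ne (ltn_ord j) (ltn_ord p)).
  rewrite (sum_single_ord (j := j)) ?eqxx.
    case: ((g j + al)%N =P g j) => [E|_]; first lia.
    by rewrite add0r.
  move=> p Hp; case: ((g j + al)%N =P g p) => [E|_].
    by exfalso; apply: (g_ne (ltn_ord p) (ltn_ord j)).
  case: ((g j + al)%N =P (g p + al)%N) => [E|_]; last by rewrite addr0.
  exfalso; move/eqP: Hp => Hp; apply: Hp; apply: val_inj.
  by apply: g_inj; [exact: ltn_ord | exact: ltn_ord | move/addIn: E => ->].
move=> x Kx; split.
  move=> H n Hn; apply: NNPP => Hnh.
  have [p Hp Ep] := Bdec ((proj1 (K_char x) Kx) _ Hn) Hnh.
  have := H (Ordinal Hp); rewrite (cong0 (@psiB_R _ _)) psiB0 psiBal /= => [[H0 Ha]].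
  by case: Ep => E; move: Hn; rewrite E ?H0 ?Ha eqxx.
move=> Rx j; rewrite (cong0 (@psiB_R _ _)) psiB0 psiBal; split.
  case: (eqVneq (x (g j)) 0) => // /Rx; by move/(g_notH (ltn_ord j)).
case: (eqVneq (x (g j + al)%N) 0) => // /Rx; by move/(ga_notH (ltn_ord j)).
Qed.

End Backward.
End Alpha.

Lemma main2 : is_2AGL k a f cs ->
  (quot_iso_pow Rs Ks Rs Cs (size cs).-1 <->
   exists j : 'I_l, forall i : nat, (1 <= i <= (size cs).-1)%N ->
     (f + a j = nth 0 cs i.-1 + nth 0 cs (size cs - i).-1)%N).
Proof.
move=> [H2 H3].
have Tnf : ~ Kset f by move=> H; apply: H; split => //; rewrite subnn; exact: inH0.
have mkTK : forall y, Tset y -> ~ Kset y -> y <> f ->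
    forall y', Tset y' -> ~ Kset y' -> y' = f \/ y' = (f - (f - y))%N.
  move=> y Ty Ky Hyf y' Ty' Ky'; have [Hyle _] := notKset Ky.
  case: (no3 H3 Tf Ty Ty' Tnf Ky Ky') => [E|[E|E]].
  - by exfalso; apply: Hyf.
  - by left.
  - by right; rewrite subKn.
split.
  move=> Hiso; have [y [Ty Ky Hyf]] := chain2 H2.
  have [Hyle Hyh] := notKset Ky.
  have HTK := mkTK y Ty Ky Hyf.
  have HfaT : Tset (f - (f - y)) by rewrite subKn.
  have Hal0 : (f - y)%N <> 0%N by lia.
  move: Hiso => [psi [P1 [P2 [P3 [P4 [P5 P6]]]]]].
  apply: (@fwd_c (f - y) Hyh Hal0 (leq_subr _ _) HTK).
  exact: (@fwd_a (f - y) Hyh Hal0 (leq_subr _ _) HTK HfaT psi P1 P3 P4 P5 P6).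
move=> [j Hj].
have Hal := inH_gen j.
have Hal0 : a j <> 0%N by have := Hpos j; lia.
have Hcond : forall p, (p < (size cs).-1)%N ->
    (f + a j = nth 0 cs p + nth 0 cs ((size cs).-1.-1 - p))%N.
  move=> p Hp; have := Hj p.+1 ltac:(lia).
  by rewrite (_ : (size cs - p.+1).-1 = ((size cs).-1.-1 - p))%N //; lia.
have Hm : (0 < (size cs).-1)%N by lia.
have C0 := Hcond 0%N Hm.
have L1 := PF_le (cs_PF (p := 0) ltac:(lia)).
have L2 := PF_le (cs_PF (p := (size cs).-1.-1 - 0) ltac:(lia)).
have Half : (a j <= f)%N by lia.
have HfaT : Tset (f - a j).
  have := T_add (T_K (Kset_g (p := 0) ltac:(lia)))
                (T_K (Kset_g (p := (size cs).-1.-1 - 0) ltac:(lia))).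
  by rewrite (_ : (f - nth 0 cs 0 + (f - nth 0 cs ((size cs).-1.-1 - 0)) = f - a j)%N) //; lia.
have Kfa : ~ Kset (f - a j).
  by move=> H; apply: H; split; [lia | rewrite subKn].
have HTK : forall y, Tset y -> ~ Kset y -> y = f \/ y = (f - a j)%N.
  move=> y Ty Ky; have := mkTK _ HfaT Kfa ltac:(lia) y Ty Ky.
  by rewrite subKn ?leq_subr.
exact: (@bwd (a j) Hal Hal0 Half HTK HfaT Hcond).
Qed.

End Semigroup.

Local Close Scope ring_scope.

Theorem proposition6p8 (k : fieldType) (l : nat) (a : 'I_l -> nat) (f : nat)
  (cs : seq nat) :
  (forall i, 0 < a i)%N ->
  \big[gcdn/0%N]_(i < l) a i = 1%N ->
  is_frobenius a f ->
  sorted ltn cs ->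
  (forall n : nat, n \in cs <-> isPF a n) ->
  (2 <= size cs)%N ->
  is_2AGL k a f cs ->
  (quot_iso_pow (semigroupR (k:=k) a) (canonK a f cs) (semigroupR a)
     (conductor a f cs) (size cs).-1
   <->
   exists j : 'I_l, forall i : nat, (1 <= i <= (size cs).-1)%N ->
     (f + a j = nth 0 cs i.-1 + nth 0 cs (size cs - i).-1)%N).
Proof.
move=> Hpos _ Hfrob Hsort Hcs Hsize H2.
exact: (main2 Hpos Hfrob Hsort Hcs Hsize H2).
Qed.
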